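(* Let $G=GL(\infty,F_2)\ltimes F_2^\infty$. For $g\in GL(\infty,F_2)$ let $f_g=\frac{1}{\#R(g-I)}\sum_{v\in R(g-I)}u_v\in L(F_2^\infty)$, where $R(g-I)$ is the (finite) range of $g-I$. Let $\mathcal M_{exo}$ be the von Neumann subalgebra of $L(G)$ generated by $L(F_2^\infty)$ together with the elements $u_gf_g$, $g\in GL(\infty,F_2)$. Then $\mathcal M_{exo}$ is a $G$-invariant von Neumann subalgebra of $L(G)$ which is not of the form $L(N)$ for any normal subgroup $N\trianglelefteq G$.
   Context: For a countable discrete group $G$, $L(G)$ is the group von Neumann algebra generated by the left regular unitaries $u_g$ on $\ell^2(G)$; for a subgroup $N$, $L(N)$ is the von Neumann subalgebra generated by $\{u_g:g\in N\}$. A von Neumann subalgebra $\mathcal M\subseteq L(G)$ is $G$-invariant if $u_g\mathcal M u_g^*\subseteq\mathcal M$ for all $g\in G$. $F_2$ is the field with two elements and $F_2^\infty=\bigoplus_{\mathbb N}F_2$ is the space of finitely supported column vectors, regarded as an abelian group under addition. $GL(\infty,F_2)$ is the group of invertible $\mathbb N\times\mathbb N$ matrices $M$ over $F_2$ with $M_{ij}\neq\delta_{ij}$ for only finitely many $(i,j)$, acting on $F_2^\infty$ by matrix multiplication; $I$ is the identity matrix. $G=GL(\infty,F_2)\ltimes F_2^\infty$ is the semidirect product with $gvg^{-1}=g(v)$. *)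

(* Defs.v *)
From HB Require Import structures.
From mathcomp Require Import all_boot all_order all_algebra finmap.
From mathcomp Require Import boolp reals.
From mathcomp.real_closed Require Import complex.

Set Implicit Arguments.
Unset Strict Implicit.
Unset Printing Implicit Defensive.
Import Order.TTheory GRing.Theory Num.Theory.

Local Open Scope fset_scope.

(* A finitely supported column vector v in F_2^oo is represented by its
   (finite) support { i | v_i = 1 }. *)
Definition vec := {fset nat}.

(* An N x N matrix M over F_2 with M_ij <> delta_ij for only finitely many
   (i,j) is represented by the finite set D of positions (i,j) where
   M_ij <> delta_ij, i.e. M = I + D (entrywise over F_2). *)
Definition mat := {fset (nat * nat)}.

(* symmetric difference = addition over F_2 *)
Definition symd (K : choiceType) (A B : {fset K}) : {fset K} :=
  (A `\` B) `|` (B `\` A).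

(* (M - I) w = D w, computed entrywise: (D w)_i = sum_j D_ij w_j  (mod 2) *)
Definition Dapply (D : mat) (w : vec) : vec :=
  [fset i in [fset p.1 | p in D] |
     odd (count (fun j => (i, j) \in D) (enum_fset w))].

(* M w = w + (M - I) w *)
Definition mapply (D : mat) (w : vec) : vec := symd w (Dapply D w).

Definition Dprod (D1 D2 : mat) : mat :=
  [fset ik in [fset (q.1, r.2) | q in D1, r in D2] |
     odd (count (fun j => ((ik.1, j) \in D1) && ((j, ik.2) \in D2))
                (enum_fset [fset p.2 | p in D1]))].

(* (I + D1)(I + D2) = I + (D1 + D2 + D1 D2) *)
Definition mprod (D1 D2 : mat) : mat := symd (symd D1 D2) (Dprod D1 D2).

(* raw pairs (M, v) ; the semidirect product law
   (M1, v1)(M2, v2) = (M1 M2, v1 + M1 v2) *)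
Definition raw := (mat * vec)%type.
Definition rawmul (x y : raw) : raw := (mprod x.1 y.1, symd x.2 (mapply x.1 y.2)).
Definition rawone : raw := (fset0, fset0).

(* M = I + D is invertible (its inverse is again I + D') *)
Definition isG (x : raw) : Prop :=
  exists D' : mat, mprod x.1 D' = fset0 /\ mprod D' x.1 = fset0.

Definition G := {x : raw | `[< isG x >]}.

Lemma isG_one : `[< isG rawone >].
Proof.
apply/asboolP; exists fset0.
suff -> : mprod fset0 fset0 = fset0 by [].
apply/fsetP => x; rewrite !inE /=.
by rewrite count_pred0 /= !andbF.
Qed.

Definition oneG : G := exist _ rawone isG_one.

Definition mulG (x y : G) : G :=
  match insub (rawmul (val x) (val y)) with Some z => z | None => oneG end.

Definition invG (x : G) : G :=
  match pselect (exists y, mulG x y = oneG /\ mulG y x = oneG) with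
  | left H => projT1 (cid H)
  | right _ => oneG
  end.

Definition embV (v : vec) : G :=
  match insub ((fset0, v) : raw) with Some z => z | None => oneG end.

Definition isGL (g : G) : bool := (val g).2 == fset0.

Definition in_range (g : G) (v : vec) : Prop := exists w : vec, v = Dapply (val g).1 w.

Definition normal_subgroup (N : G -> Prop) : Prop :=
  [/\ N oneG,
      (forall x y, N x -> N y -> N (mulG x y)),
      (forall x, N x -> N (invG x)) &
      (forall g n, N n -> N (mulG (mulG g n) (invG g)))].

Local Open Scope ring_scope.

(* elements of the complex group algebra C[G] as finite formal sums
   sum_k c_k g_k (lists of (coefficient, group element)) *)
Definition galg (R : realType) := seq (R[i] * G)%type.

Definition ug (R : realType) (g : G) : galg R := [:: (1, g)].
Arguments ug : clear implicits.

(* the operator of left multiplication by a on l^2(G):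
   (lam a f)(x) = sum_k c_k f(g_k^-1 x); lam (ug g) is the left regular
   unitary u_g *)
Definition lam (R : realType) (a : galg R) (f : G -> R[i]) : G -> R[i] :=
  fun x => \sum_(p <- a) p.1 * f (mulG (invG p.2) x).

Definition star (R : realType) (a : galg R) : galg R :=
  [seq (conjc p.1, invG p.2) | p <- a].

Definition gmul (R : realType) (a b : galg R) : galg R :=
  [seq (p.1 * q.1, mulG p.2 q.2) | p <- a, q <- b].

Definition sqsum (R : realType) (f : G -> R[i]) (s : seq G) : R[i] :=
  \sum_(x <- s) `|f x| ^+ 2.

Definition l2 (R : realType) (f : G -> R[i]) : Prop :=
  exists B : R[i], forall s, uniq s -> sqsum f s <= B.

Definition op (R : realType) := (G -> R[i]) -> (G -> R[i]).

Definition bounded (R : realType) (T : op R) : Prop :=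
  (forall f g (c : R[i]), l2 f -> l2 g ->
     T (fun x => c * f x + g x) =1 (fun x => c * T f x + T g x)) /\
  exists K : R[i], forall f, l2 f -> forall B : R[i],
     (forall s, uniq s -> sqsum f s <= B) ->
     forall s, uniq s -> sqsum (T f) s <= K * B.

Definition commute_l2 (R : realType) (A B : op R) : Prop :=
  forall f, l2 f -> A (B f) =1 B (A f).

Definition commutant (R : realType) (S : galg R -> Prop) (A : op R) : Prop :=
  bounded A /\
  forall a, S a -> commute_l2 A (lam a) /\ commute_l2 A (lam (star a)).

(* the von Neumann algebra generated by { lam a | S a } :
   the bicommutant of { lam a, (lam a)^* | S a } *)
Definition vNgen (R : realType) (S : galg R -> Prop) (T : op R) : Prop :=
  bounded T /\ forall A, commutant S A -> commute_l2 T A.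

Definition LN (R : realType) (N : G -> Prop) : op R -> Prop :=
  vNgen (fun a : galg R => exists n, N n /\ a = ug R n).
Arguments LN : clear implicits.

Definition LG (R : realType) : op R -> Prop := LN R (fun _ => True).
Arguments LG : clear implicits.

(* f_g = (1 / #R(g-I)) sum_{v in R(g-I)} u_v, given an enumeration s of R(g-I) *)
Definition fgal (R : realType) (s : seq vec) : galg R :=
  [seq (((size s)%:R)^-1, embV v) | v <- s].
Arguments fgal : clear implicits.

Definition Sexo (R : realType) (a : galg R) : Prop :=
  (exists v : vec, a = ug R (embV v)) \/
  (exists (g : G) (s : seq vec),
     [/\ isGL g, uniq s, (forall v, v \in s <-> in_range g v) &
         a = gmul (ug R g) (fgal R s)]).

Definition Mexo (R : realType) : op R -> Prop := vNgen (@Sexo R).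

(* Main.v *)
Require Import Defs.
From HB Require Import structures.
From mathcomp Require Import all_boot all_order all_algebra finmap.
From mathcomp Require Import boolp reals.
From mathcomp.real_closed Require Import complex.
Set Implicit Arguments.
Unset Strict Implicit.
Unset Printing Implicit Defensive.
Import Order.TTheory GRing.Theory Num.Theory.
Local Open Scope fset_scope.

Lemma in_symd (K : choiceType) (A B : {fset K}) x :
  (x \in symd A B) = (x \in A) (+) (x \in B).
Proof. by rewrite /symd !inE; case: (x \in A); case: (x \in B). Qed.

Lemma odd_count_xor (T : Type) (p q : pred T) s :
  odd (count (fun x => p x (+) q x) s) = odd (count p s) (+) odd (count q s).
Proof.
elim: s => //= x s IH; rewrite !oddD IH.
by case: (p x); case: (q x); case: (odd (count p s)); case: (odd (count q s)).
Qed.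

Lemma odd_count_andl (T : Type) b (p : pred T) s :
  odd (count (fun x => b && p x) s) = b && odd (count p s).
Proof. by case: b => //=; rewrite count_pred0. Qed.

Lemma odd_count_swap (T U : Type) (f : T -> U -> bool) s1 s2 :
  odd (count (fun k => odd (count (fun j => f j k) s1)) s2) =
  odd (count (fun j => odd (count (fun k => f j k) s2)) s1).
Proof.
elim: s2 => /= [|k s2 IH]; first by rewrite count_pred0.
rewrite oddD oddb IH -odd_count_xor; congr (odd _).
by apply: eq_count => j /=; rewrite oddD oddb.
Qed.

Lemma count_enum_sub (K : choiceType) (w : {fset K}) (P : pred K) s :
  uniq s -> {subset w <= s} ->
  count P (enum_fset w) = count (fun j => P j && (j \in w)) s.
Proof.
move=> us sub; rewrite -count_filter.
apply/permP/uniq_perm; first exact: fset_uniq.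
  exact: filter_uniq.
by move=> x; rewrite mem_filter; case xw: (x \in w) => //=; rewrite (sub _ xw).
Qed.

Lemma memDapply (D : mat) (w : vec) i :
  (i \in Dapply D w) = odd (count (fun j => (i,j) \in D) (enum_fset w)).
Proof.
rewrite /Dapply !inE /=.
case od: (odd _); rewrite ?andbF ?andbT //.
have : (0 < count (fun j => (i, j) \in D) (enum_fset w))%N.
  by move: od; case: (count _ _).
rewrite -has_count => /hasP [j _ ij].
by apply/imfsetP; exists (i, j).
Qed.

Lemma memDprod (A B : mat) i k :
  ((i,k) \in Dprod A B) = odd (count (fun j => ((i, j) \in A) && ((j, k) \in B))
                (enum_fset [fset p.2 | p in A])).
Proof.
rewrite /Dprod !inE /=.
case od: (odd _); rewrite ?andbF ?andbT //.
have : (0 < count (fun j => ((i, j) \in A) && ((j, k) \in B)) (enum_fset [fset p.2 | p in A]))%N.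
  by move: od; case: (count _ _).
rewrite -has_count => /hasP [j _ /andP [ij jk]].
by apply/imfset2P; exists (i, j) => //; exists (j, k).
Qed.

Lemma odd_count_enum (K : choiceType) (w W : {fset K}) (P : pred K) :
  w `<=` W ->
  odd (count P (enum_fset w)) = odd (count (fun j => P j && (j \in w)) (enum_fset W)).
Proof.
move=> /fsubsetP sub; rewrite (count_enum_sub _ (fset_uniq W)) //.
Qed.

Lemma DapplyDr (D : mat) (a b : vec) :
  Dapply D (symd a b) = symd (Dapply D a) (Dapply D b).
Proof.
apply/fsetP => i; rewrite in_symd !memDapply.
have sa : a `<=` a `|` b by apply: fsubsetUl.
have sb : b `<=` a `|` b by apply: fsubsetUr.
have sab : symd a b `<=` a `|` b.
  by apply/fsubsetP => x; rewrite in_symd inE; case: (x \in a); case: (x \in b).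
rewrite (odd_count_enum _ sa) (odd_count_enum _ sb) (odd_count_enum _ sab).
rewrite -odd_count_xor; congr (odd _); apply: eq_count => j.
by rewrite in_symd; case: ((i,j) \in D); case: (j \in a); case: (j \in b).
Qed.

Lemma DapplyDl (A B : mat) (v : vec) :
  Dapply (symd A B) v = symd (Dapply A v) (Dapply B v).
Proof.
apply/fsetP => i; rewrite in_symd !memDapply -odd_count_xor.
by congr (odd _); apply: eq_count => j; rewrite in_symd.
Qed.

Lemma DapplyM (A B : mat) (v : vec) :
  Dapply (Dprod A B) v = Dapply A (Dapply B v).
Proof.
apply/fsetP => i; rewrite !memDapply.
set S := [fset p.2 | p in A] `|` Dapply B v.
have s1 : Dapply B v `<=` S by apply: fsubsetUr.
have s0 : [fset p.2 | p in A] `<=` S by apply: fsubsetUl.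
rewrite (odd_count_enum _ s1).
transitivity (odd (count (fun j => odd (count (fun k => ((i, j) \in A) && ((j, k) \in B)) (enum_fset v))) (enum_fset S))); last first.
  congr (odd _); apply: eq_count => j /=.
  by rewrite odd_count_andl memDapply.
rewrite -odd_count_swap; congr (odd _); apply: eq_count => k /=.
rewrite memDprod (odd_count_enum _ s0); congr (odd _); apply: eq_count => j /=.
case ij: ((i, j) \in A) => //=.
have -> : j \in [fset p.2 | p in A] by apply/imfsetP; exists (i, j).
by rewrite andbT.
Qed.

Lemma Dapply1 (D : mat) j i : (i \in Dapply D [fset j]) = ((i, j) \in D).
Proof.
rewrite memDapply (count_enum_sub _ (s := [:: j])) //=; last by move=> x; rewrite !inE.
by rewrite inE eqxx andbT addn0; case: ((i,j) \in D).
Qed.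

Lemma Dapply_ext (D E : mat) : (forall w, Dapply D w = Dapply E w) -> D = E.
Proof.
move=> H; apply/fsetP => [[i j]].
by rewrite -!Dapply1 H.
Qed.

Lemma Dapply0 (w : vec) : Dapply fset0 w = fset0.
Proof. by apply/fsetP => i; rewrite memDapply inE count_pred0. Qed.

Lemma Dapply_v0 (D : mat) : Dapply D fset0 = fset0.
Proof. apply/fsetP => i; rewrite memDapply inE.
have -> : enum_fset (fset0 : vec) = [::] by apply/perm_nilP/uniq_perm => //; exact: fset_uniq.
by []. Qed.

Ltac bcase := do 8 try (match goal with |- context [?x \in ?A] => case: (x \in A) end).
Ltac symd_solve := apply/fsetP => ?; rewrite ?in_symd ?in_fset0; bcase.

Lemma symdC (A B : vec) : symd A B = symd B A.
Proof. by symd_solve. Qed.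
Lemma symdA (A B C : vec) : symd A (symd B C) = symd (symd A B) C.
Proof. by symd_solve. Qed.
Lemma symd0 (A : vec) : symd A fset0 = A.
Proof. by symd_solve. Qed.
Lemma sym0d (A : vec) : symd fset0 A = A.
Proof. by symd_solve. Qed.
Lemma symdd (A : vec) : symd A A = fset0.
Proof. by symd_solve. Qed.
Lemma symdK (A B : vec) : symd A (symd A B) = B.
Proof. by symd_solve. Qed.
Lemma symd_inj (A B C : vec) : symd A B = symd A C -> B = C.
Proof. by move=> H; rewrite -(symdK A B) H symdK. Qed.

Lemma symd_eq0 (a b : vec) : symd a b = fset0 -> a = b.
Proof.
move=> H; apply/fsetP => x; have := congr1 (fun S => x \in S) H.
by rewrite /= in_symd in_fset0; case: (x \in a); case: (x \in b).
Qed.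

Lemma mapplyD (D : mat) (a b : vec) :
  mapply D (symd a b) = symd (mapply D a) (mapply D b).
Proof. rewrite /mapply DapplyDr; by symd_solve. Qed.

Lemma mapply_v0 (D : mat) : mapply D fset0 = fset0.
Proof. by rewrite /mapply Dapply_v0 symd0. Qed.

Lemma mapply0 (w : vec) : mapply fset0 w = w.
Proof. by rewrite /mapply Dapply0 symd0. Qed.

Lemma mapplyM (A B : mat) (w : vec) :
  mapply (mprod A B) w = mapply A (mapply B w).
Proof.
rewrite /mapply /mprod !DapplyDl DapplyM DapplyDr.
by symd_solve.
Qed.

Lemma mapply_ext (D E : mat) : (forall w, mapply D w = mapply E w) -> D = E.
Proof.
move=> H; apply: Dapply_ext => w.
by have := H w; rewrite /mapply => /symd_inj.
Qed.

Lemma mprod_eq0 (A B : mat) :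
  mprod A B = fset0 <-> forall w, mapply A (mapply B w) = w.
Proof.
split=> [H w|H]; first by rewrite -mapplyM H mapply0.
by apply: mapply_ext => w; rewrite mapplyM H mapply0.
Qed.

Lemma isG_mul (x y : raw) : isG x -> isG y -> isG (rawmul x y).
Proof.
move=> [D1 [h1 h1']] [D2 [h2 h2']]; exists (mprod D2 D1) => /=.
move/mprod_eq0: h1 => h1; move/mprod_eq0: h1' => h1'.
move/mprod_eq0: h2 => h2; move/mprod_eq0: h2' => h2'.
split; apply/mprod_eq0 => w.
  by rewrite (mapplyM x.1 y.1) (mapplyM D2 D1) h2 h1.
by rewrite (mapplyM D2 D1) (mapplyM x.1 y.1) h1' h2'.
Qed.

Fact gkey : unit. Proof. by []. Qed.
Definition mG := locked_with gkey (fun (x : G) (w : vec) => mapply (val x).1 w).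
Definition vG := locked_with gkey (fun (x : G) => (val x).2).
Definition Gmul := locked_with gkey mulG.
Definition Ginv := locked_with gkey invG.
Definition Gev := locked_with gkey embV.
Lemma mGE x w : mG x w = mapply (val x).1 w. Proof. by rewrite /mG unlock. Qed.
Lemma vGE x : vG x = (val x).2. Proof. by rewrite /vG unlock. Qed.
Lemma mulE : mulG = Gmul. Proof. by rewrite /Gmul unlock. Qed.
Lemma invE : invG = Ginv. Proof. by rewrite /Ginv unlock. Qed.
Lemma evE : embV = Gev. Proof. by rewrite /Gev unlock. Qed.

Lemma valM (x y : G) : val (Gmul x y) = rawmul (val x) (val y).
Proof.
have P : `[< isG (rawmul (val x) (val y)) >].
  apply/asboolP; apply: isG_mul; apply/asboolP; [exact: (valP x) | exact: (valP y)].
by rewrite -mulE /mulG (insubT (fun r : raw => `[< isG r >]) P) SubK.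
Qed.

Lemma mG_mul x y w : mG (Gmul x y) w = mG x (mG y w).
Proof. by rewrite !mGE valM mapplyM. Qed.

Lemma vG_mul x y : vG (Gmul x y) = symd (vG x) (mG x (vG y)).
Proof. by rewrite !vGE valM mGE. Qed.

Lemma mG_lin x a b : mG x (symd a b) = symd (mG x a) (mG x b).
Proof. rewrite !mGE; exact: mapplyD. Qed.

Lemma mG_0 x : mG x fset0 = fset0.
Proof. rewrite !mGE; exact: mapply_v0. Qed.

Lemma mG_one w : mG oneG w = w.
Proof. rewrite !mGE; exact: mapply0. Qed.
Lemma vG_one : vG oneG = fset0.
Proof. by rewrite vGE. Qed.

Lemma eqG (x y : G) : (forall w, mG x w = mG y w) -> vG x = vG y -> x = y.
Proof.
move=> H1 H2; apply: val_inj.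
have H1' : forall w, mapply (val x).1 w = mapply (val y).1 w by move=> w; rewrite -!mGE.
move: H2; rewrite !vGE; move: H1'.
case: (val x) => [a b]; case: (val y) => [c d] /= H ->.
by rewrite (mapply_ext H).
Qed.

Lemma mulGA x y z : Gmul x (Gmul y z) = Gmul (Gmul x y) z.
Proof.
apply: eqG => [w|]; first by rewrite !mG_mul.
by rewrite !vG_mul !mG_mul mG_lin symdA.
Qed.

Lemma mul1G x : Gmul oneG x = x.
Proof. apply: eqG => [w|]; by rewrite ?mG_mul ?vG_mul mG_one ?vG_one ?sym0d. Qed.

Lemma mulG1 x : Gmul x oneG = x.
Proof. apply: eqG => [w|]; by rewrite ?mG_mul ?vG_mul ?mG_one ?vG_one ?mG_0 ?symd0. Qed.

Lemma inv_exists (x : G) : exists y, mulG x y = oneG /\ mulG y x = oneG.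
Proof.
rewrite mulE.
have [D' [h h']] : isG (val x) by move: (valP x) => /asboolP.
have P : `[< isG (D', mapply D' (val x).2) >].
  by apply/asboolP; exists (val x).1.
exists (exist (fun r : raw => `[< isG r >]) _ P).
move/mprod_eq0: h => h; move/mprod_eq0: h' => h'.
split; (apply: eqG; [move=> w|]); rewrite ?mG_mul ?vG_mul ?mG_one ?vG_one !mGE ?vGE /=.
- by rewrite h.
- by rewrite h symdd.
- by rewrite h'.
- by rewrite symdd.
Qed.

Lemma invG_spec x : Gmul x (Ginv x) = oneG /\ Gmul (Ginv x) x = oneG.
Proof.
rewrite -mulE -invE /invG; case: pselect => [H|nH]; first exact: (projT2 (cid H)).
by exfalso; apply: nH; apply: inv_exists.
Qed.

Lemma mulGV x : Gmul x (Ginv x) = oneG. Proof. by case: (invG_spec x). Qed.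
Lemma mulVG x : Gmul (Ginv x) x = oneG. Proof. by case: (invG_spec x). Qed.

Lemma mulKG x y : Gmul (Ginv x) (Gmul x y) = y.
Proof. by rewrite mulGA mulVG mul1G. Qed.
Lemma mulKVG x y : Gmul x (Gmul (Ginv x) y) = y.
Proof. by rewrite mulGA mulGV mul1G. Qed.
Lemma mulGK x y : Gmul (Gmul y x) (Ginv x) = y.
Proof. by rewrite -mulGA mulGV mulG1. Qed.
Lemma mulGKV x y : Gmul (Gmul y (Ginv x)) x = y.
Proof. by rewrite -mulGA mulVG mulG1. Qed.

Lemma mulG_injl x : injective (Gmul x).
Proof. by move=> a b H; rewrite -(mulKG x a) H mulKG. Qed.

Lemma inv_uniq x y : Gmul x y = oneG -> y = Ginv x.
Proof. by move=> H; rewrite -(mulKG x y) H mulG1. Qed.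

Lemma invG_inv x : Ginv (Ginv x) = x.
Proof. by symmetry; apply: inv_uniq; rewrite mulVG. Qed.

Lemma invG_mul x y : Ginv (Gmul x y) = Gmul (Ginv y) (Ginv x).
Proof. by symmetry; apply: inv_uniq; rewrite -mulGA mulKVG mulGV. Qed.

Lemma invG_one : Ginv oneG = oneG.
Proof. by symmetry; apply: inv_uniq; rewrite mulG1. Qed.

Lemma mGK x w : mG x (mG (Ginv x) w) = w.
Proof. by rewrite -mG_mul mulGV mG_one. Qed.
Lemma mGVK x w : mG (Ginv x) (mG x w) = w.
Proof. by rewrite -mG_mul mulVG mG_one. Qed.
Lemma mG_inj x : injective (mG x).
Proof. by move=> a b H; rewrite -(mGVK x a) H mGVK. Qed.

Lemma vG_inv x : vG (Ginv x) = mG (Ginv x) (vG x).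
Proof.
have := congr1 vG (mulVG x); rewrite vG_mul vG_one => H.
by apply: symd_eq0; rewrite H.
Qed.

Lemma val_ev v : val (Gev v) = (fset0, v).
Proof.
have P : `[< isG ((fset0, v) : raw) >] by exact: isG_one.
by rewrite -evE /embV (insubT (fun r : raw => `[< isG r >]) P) SubK.
Qed.

Lemma mG_ev v w : mG (Gev v) w = w.
Proof. by rewrite mGE val_ev mapply0. Qed.
Lemma vG_ev v : vG (Gev v) = v.
Proof. by rewrite vGE val_ev. Qed.

Lemma ev_inj : injective Gev.
Proof. by move=> a b H; rewrite -(vG_ev a) H vG_ev. Qed.

Lemma ev0 : Gev fset0 = oneG.
Proof. by apply: eqG => [w|]; rewrite ?mG_ev ?mG_one ?vG_ev ?vG_one. Qed.

Lemma inVP x : (val x).1 = fset0 <-> forall w, mG x w = w.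
Proof.
split=> [H w|H]; first by rewrite mGE H mapply0.
by apply: mapply_ext => w; rewrite mapply0 -mGE; apply: H.
Qed.

Lemma inV_ev x : (forall w, mG x w = w) -> x = Gev (vG x).
Proof. by move=> H; apply: eqG => [w|]; rewrite ?mG_ev ?vG_ev. Qed.

Lemma in_rangeE g v : in_range g v <-> exists z, v = symd z (mG g z).
Proof.
split=> [[z ->]|[z ->]]; exists z; rewrite mGE /mapply symdK //.
Qed.

Definition glpart (x : G) : G.
Proof.
refine (exist _ ((val x).1, fset0) _).
by apply/asboolP; case/asboolP: (valP x) => D' H; exists D'.
Defined.

Lemma mG_glpart x w : mG (glpart x) w = mG x w. Proof. by rewrite !mGE. Qed.
Lemma vG_glpart x : vG (glpart x) = fset0. Proof. by rewrite !vGE. Qed.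

From mathcomp Require Import ring.
Local Open Scope ring_scope.

Section Analysis.
Variable R : realType.
Local Notation C := (R[i]).

Lemma lam_ug (g : G) (f : G -> C) : lam (ug R g) f = fun x => f (Gmul (Ginv g) x).
Proof. by apply: funext => x; rewrite /lam big_seq1 mul1r -mulE -invE. Qed.

Lemma lam_nil (f : G -> C) : lam [::] f = fun _ => 0.
Proof. by apply: funext => x; rewrite /lam big_nil. Qed.

Lemma lam_cons p (a : galg R) (f : G -> C) :
  lam (p :: a) f = fun x => p.1 * lam (ug R p.2) f x + lam a f x.
Proof. by apply: funext => x; rewrite /lam big_cons big_seq1 mul1r. Qed.

Lemma normD_sqr (x y : C) : `|x + y| ^+ 2 <= 2 * `|x| ^+ 2 + 2 * `|y| ^+ 2.
Proof.
rewrite !sqr_normc -subr_ge0.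
have -> : 2 * (x * x^*%C) + 2 * (y * y^*%C) - (x + y) * (x + y)^*%C
   = (x - y) * (x - y)^*%C by rewrite !rmorphD !rmorphN /=; ring.
exact: mulcJ_ge0.
Qed.

Lemma l2_translate (f : G -> C) y : l2 f -> l2 (fun x => f (Gmul y x)).
Proof.
move=> [B HB]; exists B => s us; rewrite /sqsum.
rewrite -(big_map (Gmul y) xpredT (fun x => `|f x| ^+ 2)); apply: HB.
by rewrite map_inj_uniq //; exact: mulG_injl.
Qed.

Lemma sqsum_translate (f : G -> C) y s :
  sqsum (fun x => f (Gmul y x)) s = sqsum f (map (Gmul y) s).
Proof. by rewrite /sqsum big_map. Qed.

Lemma l2_lin (f h : G -> C) c : l2 f -> l2 h -> l2 (fun x => c * f x + h x).
Proof.
move=> [B1 H1] [B2 H2]; exists (2 * `|c| ^+ 2 * B1 + 2 * B2) => s us.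
rewrite /sqsum.
apply: (le_trans (y := \sum_(x <- s) (2 * `|c| ^+ 2 * `|f x| ^+ 2 + 2 * `|h x| ^+ 2))).
  apply: ler_sum => x _; apply: le_trans (normD_sqr _ _) _.
  by rewrite normrM exprMn mulrA.
rewrite big_split /= -!mulr_sumr; apply: lerD.
  by apply: ler_wpM2l; [rewrite mulr_ge0 // exprn_ge0 | exact: H1].
by apply: ler_wpM2l => //; exact: H2.
Qed.

Lemma l2_0 : l2 (fun _ : G => (0 : C)).
Proof. by exists 0 => s _; rewrite /sqsum big1 // => x _; rewrite normr0 expr0n. Qed.

Lemma l2_lam (a : galg R) (f : G -> C) : l2 f -> l2 (lam a f).
Proof.
move=> lf; elim: a => [|p a IH]; first by rewrite lam_nil; exact: l2_0.
rewrite lam_cons; apply: l2_lin => //.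
by rewrite lam_ug; exact: l2_translate.
Qed.

Lemma l2_delta (y : G) : l2 (fun x => ((x == y)%:R : C)).
Proof.
exists 1 => s us; rewrite /sqsum.
have -> : \sum_(x <- s) `|((x == y)%:R : C)| ^+ 2 = \sum_(x <- s) ((x == y)%:R : C).
  by apply: eq_bigr => x _; case: (x == y); rewrite ?normr1 ?normr0 ?expr1n ?expr0n.
rewrite -natr_sum.
have -> : (\sum_(x <- s) (x == y))%N = count (pred1 y) s.
  by elim: s {us} => [|x s IH]; rewrite ?big_nil ?big_cons //= IH.
by rewrite count_uniq_mem //; case: (y \in s); rewrite ?ler01 ?lexx.
Qed.

Lemma l2_mul01 (b : G -> bool) (f : G -> C) : l2 f -> l2 (fun x => (b x)%:R * f x).
Proof.
move=> [B H]; exists B => s us; apply: le_trans (H s us).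
apply: ler_sum => x _; case: (b x); rewrite ?mul1r ?mul0r ?normr0 ?expr0n //.
by rewrite exprn_ge0.
Qed.

End Analysis.

Local Open Scope ring_scope.

Section P.
Variable R : realType.
Local Notation C := (R[i]).

Lemma sqsum_lin_le (f h : G -> C) c s :
  sqsum (fun x => c * f x + h x) s <= 2 * `|c| ^+ 2 * sqsum f s + 2 * sqsum h s.
Proof.
rewrite /sqsum.
apply: (le_trans (y := \sum_(x <- s) (2 * `|c| ^+ 2 * `|f x| ^+ 2 + 2 * `|h x| ^+ 2))).
  apply: ler_sum => x _; apply: le_trans (normD_sqr _ _) _.
  by rewrite normrM exprMn mulrA.
by rewrite big_split /= -!mulr_sumr.
Qed.

Lemma sqsum_ge0 (f : G -> C) s : 0 <= sqsum f s.
Proof. by rewrite /sqsum; apply: sumr_ge0 => x _; rewrite exprn_ge0. Qed.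

Lemma lam_lin (a : galg R) (f h : G -> C) c :
  lam a (fun x => c * f x + h x) = fun x => c * lam a f x + lam a h x.
Proof.
apply: funext => x; rewrite /lam mulr_sumr -big_split /=.
by apply: eq_bigr => p _; ring.
Qed.

Lemma bounded_lam (a : galg R) : bounded (lam a).
Proof.
split; first by move=> f h c _ _; rewrite lam_lin.
elim: a => [|p a [K IH]].
  exists 0 => f _ B _ s _; rewrite lam_nil mul0r /sqsum big1 // => x _.
  by rewrite normr0 expr0n.
exists (2 * `|p.1| ^+ 2 + 2 * K) => f lf B HB s us.
rewrite lam_cons; apply: le_trans (sqsum_lin_le _ _ _ _) _.
have h1 : sqsum (lam (ug R p.2) f) s <= B.
  by rewrite lam_ug sqsum_translate; apply: HB; rewrite map_inj_uniq //; exact: mulG_injl.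
have h2 := IH f lf B HB s us.
have -> : (2 * `|p.1| ^+ 2 + 2 * K) * B = 2 * `|p.1| ^+ 2 * B + 2 * (K * B) by ring.
apply: lerD.
  by apply: ler_wpM2l => //; rewrite mulr_ge0 // exprn_ge0.
by apply: ler_wpM2l.
Qed.

Lemma gen_vN (S : galg R -> Prop) a : S a -> vNgen S (lam a).
Proof.
move=> Sa; split; first exact: bounded_lam.
move=> A [_ HA] f lf x; symmetry; exact: (HA a Sa).1 f lf x.
Qed.

Lemma commute_lam (A : op R) : bounded A ->
  (forall g, commute_l2 A (lam (ug R g))) -> forall a, commute_l2 A (lam a).
Proof.
move=> [lin _] Hg; elim=> [|p a IH] f lf x.
  rewrite !lam_nil.
  have := lin (fun _ => 0) (fun _ => 0) (-1) (@l2_0 R) (@l2_0 R) x.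
  have -> : (fun _ : G => -1 * 0 + 0 : C) = fun _ => 0.
    by apply: funext => y; rewrite mulr0 addr0.
  by move=> ->; rewrite mulN1r addNr.
rewrite (lam_cons p a f) (lam_cons p a (A f)).
rewrite (lin _ _ _ (l2_lam _ lf) (l2_lam _ lf) x).
by rewrite (Hg _ _ lf x) (IH f lf x).
Qed.

Lemma part1 (T : op R) : Mexo T -> LG R T.
Proof.
move=> [bT HT]; split=> // A [bA HA]; apply: HT; split=> // a _.
have Hg : forall g, commute_l2 A (lam (ug R g)).
  by move=> g; exact: (HA (ug R g) (ex_intro _ g (conj I erefl))).1.
by split; apply: commute_lam.
Qed.

End P.

Local Open Scope ring_scope.


Definition Gconj (g x : G) := Gmul (Gmul g x) (Ginv g).

Lemma GconjK g y : Gconj (Ginv g) (Gconj g y) = y.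
Proof. by rewrite /Gconj invG_inv !mulGA mulVG mul1G mulGKV. Qed.

Lemma conjg_inv g y : Ginv (Gconj g y) = Gconj g (Ginv y).
Proof. by rewrite /Gconj !invG_mul invG_inv mulGA. Qed.

Lemma conjg_ev g v : Gconj g (Gev v) = Gev (mG g v).
Proof.
apply: eqG => [w|].
  by rewrite /Gconj !mG_mul mG_ev mGK mG_ev.
rewrite /Gconj !vG_mul !mG_mul vG_ev mG_ev vG_inv mGK vG_ev.
by symd_solve.
Qed.

Section P2.
Variable R : realType.
Local Notation C := (R[i]).

Definition conjl g (a : galg R) := [seq (p.1, Gconj g p.2) | p <- a].

Lemma lamE (a : galg R) (f : G -> C) x :
  lam a f x = \sum_(p <- a) p.1 * f (Gmul (Ginv p.2) x).
Proof. by rewrite /lam -mulE -invE. Qed.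

Lemma lam_conj g (a : galg R) (f : G -> C) :
  lam (ug R g) (lam a f) = lam (conjl g a) (lam (ug R g) f).
Proof.
apply: funext => x; rewrite (lam_ug g (lam a f)) !lamE big_map; apply: eq_bigr => p _.
rewrite lam_ug /=; congr (_ * f _).
by rewrite /Gconj !invG_mul invG_inv !mulGA mulVG mul1G.
Qed.

Lemma conjl_inv g (a : galg R) : conjl (Ginv g) (conjl g a) = a.
Proof. by elim: a => //= p a ->; rewrite GconjK; case: p. Qed.

Lemma starE (a : galg R) : star a = [seq (conjc p.1, Ginv p.2) | p <- a].
Proof. by rewrite /star invE. Qed.

Lemma star_conjl g (a : galg R) : star (conjl g a) = conjl g (star a).
Proof.
rewrite !starE /conjl -!map_comp; apply: eq_map => p /=.
by rewrite conjg_inv.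
Qed.

Lemma lam_ug_inv g (f : G -> C) : lam (ug R g) (lam (ug R (Ginv g)) f) = f.
Proof.
rewrite (lam_ug (Ginv g)) (lam_ug g); apply: funext => x /=.
by rewrite invG_inv mulKVG.
Qed.

Lemma bounded_conj (A : op R) g h :
  bounded A -> bounded (fun f => lam (ug R g) (A (lam (ug R h) f))).
Proof.
move=> [lin [K HK]]; split.
  move=> f1 f2 c l1 l2 x; rewrite !lam_ug /=.
  exact: lin _ _ _ (l2_translate _ l1) (l2_translate _ l2) _.
exists K => f lf B HB s us.
rewrite (lam_ug g) sqsum_translate; apply: HK.
- by rewrite lam_ug; exact: l2_translate.
- move=> s' us'; rewrite lam_ug sqsum_translate; apply: HB.
  by rewrite map_inj_uniq //; exact: mulG_injl.
- by rewrite map_inj_uniq //; exact: mulG_injl.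
Qed.

Lemma commute_conj (A : op R) g (a : galg R) :
  commute_l2 A (lam (conjl g a)) ->
  commute_l2 (fun f => lam (ug R (Ginv g)) (A (lam (ug R g) f))) (lam a).
Proof.
move=> HA f lf x /=.
have lf' : l2 (lam (ug R g) f) by rewrite lam_ug; exact: l2_translate.
rewrite lam_conj (funext (HA _ lf')) lam_conj conjl_inv //.
Qed.

Lemma gmul_ug g (b : galg R) : gmul (ug R g) b = [seq (1 * q.1, Gmul g q.2) | q <- b].
Proof. by rewrite /gmul /= cats0 -mulE. Qed.

Lemma ahfE h s : gmul (ug R h) (fgal R s) =
   [seq (1 * (size s)%:R^-1, Gmul h (Gev v)) | v <- s].
Proof. by rewrite gmul_ug /fgal -map_comp evE. Qed.

End P2.

Local Open Scope ring_scope.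


Section P2b.
Variable R : realType.
Local Notation C := (R[i]).

Lemma isGLE h : isGL h = (vG h == fset0).
Proof. by rewrite /isGL vGE. Qed.

Lemma Sexo_conj g (a : galg R) : Sexo a -> Sexo (conjl g a).
Proof.
case=> [[v ->] | [h [s [Hh us Hs ->]]]].
  by left; exists (mG g v); rewrite /conjl /ug /= evE conjg_ev.
move: Hh; rewrite isGLE => /eqP Hh.
set u := vG g.
set h' := glpart (Gconj g h).
have mh' : forall y, mG h' y = mG g (mG h (mG (Ginv g) y)).
  by move=> y; rewrite mG_glpart /Gconj !mG_mul.
set u1 := mG (Ginv h') u.
set c0 := symd u u1.
pose phi w := symd c0 (mG g w).
have elem : forall w, Gconj g (Gmul h (Gev w)) = Gmul h' (Gev (phi w)).
  move=> w; apply: eqG => [y|].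
    by rewrite /Gconj !mG_mul !mG_ev mh'.
  rewrite /Gconj !vG_mul !mG_mul !vG_ev !mG_ev Hh vG_inv vG_glpart /phi /c0.
  rewrite !mG_lin /u1 mGK !mh' mGVK sym0d -/u.
  by rewrite mG_0 sym0d; symd_solve.
have key : mG h (mG (Ginv g) u1) = mG (Ginv g) u.
  have := mGK h' u; rewrite -/u1 mh' => E.
  by rewrite -[X in _ = mG _ X]E mGVK.
right; exists h', (map phi s); split.
- by rewrite isGLE vG_glpart.
- rewrite map_inj_uniq // => a1 b1 /symd_inj /mG_inj //.
- move=> v; split.
    move=> /mapP [w ws ->].
    have := (Hs w).1 ws; move/in_rangeE => [z ->].
    apply/in_rangeE; exists (symd (mG g z) u1).
    rewrite /phi /c0 !mG_lin /u1 mGK !mh' mGVK -/u1.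
    by symd_solve.
  move/in_rangeE => [z ->].
  apply/mapP; exists (mG (Ginv g) (symd (symd z (mG h' z)) c0)).
    apply: (proj2 (Hs _)); apply/in_rangeE; exists (mG (Ginv g) (symd z u1)).
    rewrite /c0 !mG_lin (mh' z) mGVK key.
    by symd_solve.
  by rewrite /phi mGK; symd_solve.
- rewrite !ahfE /conjl -!map_comp size_map; apply: eq_map => w /=.
  by rewrite elem.
Qed.

Lemma part2 g (T : op R) : Mexo T ->
  Mexo (fun f => lam (ug R g) (T (lam (ug R (invG g)) f))).
Proof.
rewrite invE => -[bT HT]; split; first exact: bounded_conj.
move=> A cA f lf x.
pose B := fun f => lam (ug R (Ginv g)) (A (lam (ug R g) f)).
have cB : commutant (@Sexo R) B.
  split; first exact: bounded_conj cA.1.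
  move=> a Sa; split.
    by apply: commute_conj; apply: (cA.2 _ (Sexo_conj g Sa)).1.
  apply: commute_conj; rewrite -star_conjl.
  exact: (cA.2 _ (Sexo_conj g Sa)).2.
have lF : l2 (lam (ug R (Ginv g)) f) by rewrite lam_ug; exact: l2_translate.
have E1 : lam (ug R (Ginv g)) (A f) = B (lam (ug R (Ginv g)) f).
  by rewrite /B lam_ug_inv.
rewrite E1 (funext (HT B cB _ lF)) /B.
by rewrite lam_ug_inv.
Qed.

End P2b.

Local Open Scope ring_scope.


Lemma invG_ev v : Ginv (Gev v) = Gev v.
Proof.
symmetry; apply: inv_uniq; apply: eqG => [w|].
  by rewrite mG_mul !mG_ev mG_one.
by rewrite vG_mul mG_ev vG_ev symdd vG_one.
Qed.

Lemma Gconj_evev v w : Gconj (Gev v) (Gev w) = Gev w.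
Proof. by rewrite conjg_ev mG_ev. Qed.

Lemma in_range_symd h a b : in_range h a -> in_range h b -> in_range h (symd a b).
Proof.
move=> /in_rangeE [z1 ->] /in_rangeE [z2 ->]; apply/in_rangeE.
exists (symd z1 z2); rewrite mG_lin; by symd_solve.
Qed.

Lemma perm_shift h (s : seq vec) t :
  (forall v, v \in s <-> in_range h v) -> uniq s -> in_range h t ->
  perm_eq (map (symd t) s) s.
Proof.
move=> Hs us ht; apply: uniq_perm => //.
  by rewrite map_inj_uniq // => a b /symd_inj.
move=> x; apply/idP/idP.
  move=> /mapP [w ws ->]; apply/(proj2 (Hs _)).
  by apply: in_range_symd => //; apply/(proj1 (Hs _)).
move=> xs; apply/mapP; exists (symd t x); last by rewrite symdK.
apply/(proj2 (Hs _)); apply: in_range_symd => //; exact/(proj1 (Hs _)).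
Qed.

Lemma elem3 v h w : vG h = fset0 ->
  Gconj (Gev v) (Gmul h (Gev w)) = Gmul h (Gev (symd (symd (mG (Ginv h) v) v) w)).
Proof.
move=> Hh; apply: eqG => [y|].
  by rewrite /Gconj !mG_mul !mG_ev invG_ev mG_ev.
rewrite /Gconj invG_ev !vG_mul !mG_mul !vG_ev !mG_ev Hh !mG_lin mGK.
by symd_solve.
Qed.

Section P3.
Variable R : realType.
Local Notation C := (R[i]).

Lemma lam_shift (c : C) (k : vec -> G) (s : seq vec) t (F : G -> C) :
  perm_eq (map (symd t) s) s ->
  lam [seq (c, k (symd t w)) | w <- s] F = lam [seq (c, k w) | w <- s] F.
Proof.
move=> P; apply: funext => x; rewrite !lamE !big_map /=.
rewrite -(big_map (symd t) xpredT (fun w => c * F (Gmul (Ginv (k w)) x))).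
exact: perm_big.
Qed.

Lemma commute_of_eq e (b : galg R) :
  (forall F, lam (conjl e b) F = lam b F) -> commute_l2 (lam (ug R e)) (lam b).
Proof. by move=> H f lf x; rewrite lam_conj H. Qed.

Lemma lamV_commute w : commutant (@Sexo R) (lam (ug R (Gev w))).
Proof.
split; first exact: bounded_lam.
move=> a [[v ->] | [h [s [Hh us Hs ->]]]].
  split; apply: commute_of_eq => F.
    by rewrite /conjl /ug /= evE Gconj_evev.
  by rewrite starE /conjl /ug /= evE invG_ev Gconj_evev.
move: Hh; rewrite isGLE => /eqP Hh.
set t := symd (mG (Ginv h) (vG (Gev w))) (vG (Gev w)).
have ht : in_range h t.
  apply/in_rangeE; exists (mG (Ginv h) (vG (Gev w))).
  by rewrite /t mGK symdC.
have P := perm_shift Hs us ht.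
split; apply: commute_of_eq => F.
  rewrite ahfE /conjl -map_comp /=.
  have -> : [seq ((1 * (size s)%:R^-1 : C), Gconj (Gev w) (Gmul h (Gev x))) | x <- s]
     = [seq ((1 * (size s)%:R^-1 : C), Gmul h (Gev (symd t x))) | x <- s].
    apply: eq_map => x /=; by rewrite -{1}(vG_ev w) elem3.
  exact: (lam_shift _ (fun x => Gmul h (Gev x))).
rewrite ahfE starE /conjl -!map_comp /=.
have -> : [seq (conjc (1 * (size s)%:R^-1 : C), Gconj (Gev w) (Ginv (Gmul h (Gev x)))) | x <- s]
     = [seq (conjc (1 * (size s)%:R^-1 : C), Ginv (Gmul h (Gev (symd t x)))) | x <- s].
  apply: eq_map => x /=; by rewrite -conjg_inv -{1}(vG_ev w) elem3.
exact: (lam_shift _ (fun x => Ginv (Gmul h (Gev x)))).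
Qed.

End P3.

Local Open Scope fset_scope.
Definition D0 : mat := [fset (0%N, 1%N)].

Lemma memD0 (w : vec) i : (i \in Dapply D0 w) = (i == 0%N) && (1%N \in w).
Proof.
rewrite memDapply.
rewrite (eq_count (a2 := fun j => (i == 0%N) && (j == 1%N))); last first.
  by move=> j; rewrite /D0 !inE xpair_eqE.
rewrite odd_count_andl.
have -> : count (fun j => j == 1%N) (enum_fset w) = count (pred1 1%N) (enum_fset w) by [].
by rewrite count_uniq_mem ?fset_uniq //; case: (1%N \in enum_fset w).
Qed.

Lemma isG0 : `[< isG ((D0, fset0) : raw) >].
Proof.
apply/asboolP; exists D0; split; apply/mprod_eq0 => w;
apply/fsetP => i; rewrite /mapply !in_symd !memD0 !in_symd !memD0 /=;
by case: (i == 0%N); case: (1%N \in w); case: (i \in w).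
Qed.

Definition g0 : G := exist (fun r : raw => `[< isG r >]) _ isG0.
Definition s0 : seq vec := [:: fset0; [fset 0%N]].

Lemma Hs0 v : v \in s0 <-> in_range g0 v.
Proof.
split.
  rewrite !inE => /orP [/eqP -> | /eqP ->].
    by exists fset0; rewrite Dapply_v0.
  by exists [fset 1%N]; apply/fsetP => i; rewrite memD0 !inE andbT.
move=> [w ->] /=; rewrite !inE; case H1: (1%N \in w).
  by apply/orP; right; apply/eqP/fsetP => i; rewrite memD0 H1 !inE andbT.
by apply/orP; left; apply/eqP/fsetP => i; rewrite memD0 H1 !inE andbF.
Qed.

Lemma us0 : uniq s0.
Proof. by rewrite /= andbT inE; apply/eqP => /fsetP /(_ 0%N); rewrite !inE. Qed.

Local Open Scope ring_scope.

Section P3b.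
Variable R : realType.
Local Notation C := (R[i]).

Definition phiV (x : G) : bool := ((val x).1 == fset0).

Lemma phiE m x : (forall w, mG m w = w) -> phiV (Gmul (Ginv m) x) = phiV x.
Proof.
move=> Hm.
have Hm' : forall w, mG (Ginv m) w = w by move=> w; rewrite -[LHS]Hm mGK.
apply/eqP/eqP => /inVP Hx; apply/inVP => w.
  by have := Hx w; rewrite mG_mul Hm'.
by rewrite mG_mul Hm' Hx.
Qed.

Lemma sqsum_mul01 (b : G -> bool) (f : G -> C) s :
  sqsum (fun x => (b x)%:R * f x) s <= sqsum f s.
Proof.
apply: ler_sum => x _; case: (b x); rewrite ?mul1r ?mul0r ?normr0 ?expr0n //.
by rewrite exprn_ge0.
Qed.

Lemma part3 (N : G -> Prop) : normal_subgroup N ->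
  ~ (forall T : op R, Mexo T <-> LN R N T).
Proof.
move=> _ H.
have NV : forall n, N n -> forall w, mG n w = w.
  move=> n Nn w.
  have Mn : Mexo (lam (ug R n)) by apply/H; apply: gen_vN; exists n.
  have E := Mn.2 _ (lamV_commute R w) (fun x => (x == oneG)%:R) (l2_delta R oneG) (Gmul n (Gev w)).
  rewrite !lam_ug /= mulKG mulVG eqxx in E.
  have Hb : Gmul (Ginv n) (Gmul (Ginv (Gev w)) (Gmul n (Gev w))) == oneG.
    by move/eqP: E; rewrite eqr_nat; case: (_ == oneG).
  move/eqP: Hb => Heq.
  have := congr1 (Gmul (Gev w)) (congr1 (Gmul n) Heq).
  rewrite mulKVG mulKVG mulG1 => Hc.
  have := congr1 vG Hc; rewrite !vG_mul vG_ev mG_ev (symdC w) => Hv.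
  exact: symd_inj Hv.
pose a0 := gmul (ug R g0) (fgal R s0).
have Sa0 : Sexo a0.
  by right; exists g0, s0; split => //; [exact: us0 | exact: Hs0].
have LNa0 : LN R N (lam a0) by apply/H; exact: gen_vN.
pose Mphi := fun (f : G -> C) x => (phiV x)%:R * f x.
have cphi : commutant (fun a => exists n, N n /\ a = ug R n) Mphi.
  split.
    split; first by move=> f1 f2 c _ _ x; rewrite /Mphi; ring.
    exists 1 => f lf B HB s us; rewrite mul1r; apply: le_trans (HB s us).
    exact: sqsum_mul01.
  move=> a [n [Nn ->]]; split.
    by move=> f lf x; rewrite /Mphi !lam_ug /= phiE //; exact: NV.
  rewrite starE map_cons conjc1.
  change (commute_l2 Mphi (lam (ug R (Ginv n)))).
  have Hn' : forall w, mG (Ginv n) w = w.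
    by move=> w; rewrite -[LHS](NV n Nn) mGK.
  by move=> f lf x; rewrite /Mphi !lam_ug /= phiE.
have E := LNa0.2 Mphi cphi _ (l2_delta R oneG) g0.
move: E; rewrite /Mphi /a0 ahfE !lamE !big_map /= !big_cons big_nil /=.
have p0 : phiV g0 = false.
  by apply/eqP => /fsetP /(_ (0%N, 1%N)); rewrite !inE.
rewrite p0 mul0r.
rewrite ev0 mulG1 mulVG invG_mul mulGKV invG_ev.
have ne : (Gev [fset 0%N] == oneG) = false.
  apply/eqP => Ev; have := congr1 vG Ev; rewrite vG_ev vG_one.
  by move/fsetP /(_ 0%N); rewrite !inE.
have -> : phiV oneG = true by rewrite /phiV eqxx.
rewrite ne eqxx !mulr1 !mulr0 !addr0.
by move/eqP; rewrite mul1r invr_eq0 pnatr_eq0.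
Qed.

End P3b.


Unset Implicit Arguments.

Theorem lemma4p14 (R : realType) :
  [/\ (forall T : op R, Mexo T -> LG R T),
      (forall (g : G) (T : op R), Mexo T ->
          Mexo (fun f => lam (ug R g) (T (lam (ug R (invG g)) f)))) &
      (forall N : G -> Prop, normal_subgroup N ->
          ~ (forall T : op R, Mexo T <-> LN R N T))].
Proof.
split.
- exact: part1.
- move=> g T; exact: part2.
- exact: part3.
Qed.
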